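(* Let $1\le t_1<t_2$ and $n\ge t_1+t_2$ be integers, and let $G=G_n\langle t_1,t_2\rangle$. If $t_2\ne 2t_1$, then $G$ contains a hole of length $(t_1+t_2)/\gcd(t_1,t_2)$.
   Context: For integers $n\ge 2$, $k\ge 1$ and $1\le t_1<t_2<\cdots<t_k\le n-1$, the Toeplitz graph $G_n\langle t_1,\ldots,t_k\rangle$ is the simple graph with vertex set $[n]=\{1,\ldots,n\}$ in which two distinct vertices $i,j$ are adjacent if and only if $|i-j|\in\{t_1,\ldots,t_k\}$. A hole is an induced (chordless) cycle of length at least $4$. *)

(* Defs.v *)
From mathcomp Require Import all_boot.
Set Implicit Arguments. Unset Strict Implicit. Unset Printing Implicit Defensive.

Definition toeplitz_adj (n : nat) (ts : seq nat) (i j : nat) : bool :=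
  [&& 1 <= i <= n, 1 <= j <= n, i != j & ((i - j) + (j - i)) \in ts].

(* A hole of G: an induced (chordless) cycle of length >= 4, given as the
   sequence c = [v_0; ...; v_{L-1}] of its distinct vertices in cyclic order. *)
Definition is_hole (adj : nat -> nat -> bool) (vert : pred nat) (c : seq nat) : Prop :=
  [/\ 4 <= size c, uniq c, all vert c &
      forall p q, p < q < size c ->
        adj (nth 0 c p) (nth 0 c q) = (q == p.+1) || ((p == 0) && (q == (size c).-1))].

Definition toeplitz_hole (n : nat) (ts : seq nat) (c : seq nat) : Prop :=
  is_hole (toeplitz_adj n ts) (fun v => 1 <= v <= n) c.

(* Main.v *)
Require Import Defs.
From mathcomp Require Import all_boot.
From mathcomp Require Import zify.

Lemma modD_small x t m : x < m -> t < m ->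
  (x + t) %% m = if x + t < m then x + t else x + t - m.
Proof.
move=> hx ht; case: ifP => h; first by rewrite modn_small.
have -> : x + t = (x + t - m) + m by lia.
rewrite modnDr modn_small; lia.
Qed.

Lemma adjA t1 t2 x y : 0 < t1 -> t1 < t2 -> x < t1 + t2 -> y < t1 + t2 ->
  ((x.+1 != y.+1) && (((x.+1 - y.+1) + (y.+1 - x.+1)) \in [:: t1; t2])) =
  (y == (x + t1) %% (t1 + t2)) || (x == (y + t1) %% (t1 + t2)).
Proof.
move=> h1 h2 hx hy.
rewrite !modD_small; try lia.
rewrite !inE.
case: ifP => ha; case: ifP => hb; apply/idP/idP; lia.
Qed.

Lemma cancelC L a x y : coprime L a ->
  (x * a == y * a %[mod L]) = (x == y %[mod L]).
Proof.
move=> co.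
case: (leqP y x) => h.
  rewrite !eqn_mod_dvd ?leq_mul2r ?h ?orbT // -mulnBl Gauss_dvdl //.
rewrite eq_sym [in RHS]eq_sym.
have h' : x <= y by lia.
rewrite !eqn_mod_dvd ?leq_mul2r ?h' ?orbT // -mulnBl Gauss_dvdl //.
Qed.

Lemma finalL p q L : p < q -> q < L ->
  ((q == p.+1 %[mod L]) || (p == q.+1 %[mod L])) = (q == p.+1) || ((p == 0) && (q == L.-1)).
Proof.
move=> hpq hq.
have hp : p < L by apply: ltn_trans hpq hq.
rewrite (modn_small hq) (modn_small hp).
rewrite (modn_small (_ : p.+1 < L)); last by apply: leq_ltn_trans hpq hq.
case: (ltnP q.+1 L) => hq1.
  rewrite (modn_small hq1); apply/idP/idP; lia.
have -> : q.+1 = L by lia.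
rewrite modnn; apply/idP/idP; lia.
Qed.

Theorem lemma3p2 (n t1 t2 : nat) :
  1 <= t1 -> t1 < t2 -> t1 + t2 <= n -> t2 != t1 * 2 ->
  exists c : seq nat,
    toeplitz_hole n [:: t1; t2] c /\ size c = (t1 + t2) %/ gcdn t1 t2.
Proof.
move=> h1 h12 hn h2.
set d := gcdn t1 t2.
have dpos : 0 < d by rewrite gcdn_gt0 h1.
set a1 := t1 %/ d. set b1 := t2 %/ d.
have ea : t1 = a1 * d by rewrite divnK // dvdn_gcdl.
have eb : t2 = b1 * d by rewrite divnK // dvdn_gcdr.
have cab : coprime a1 b1.
  have : gcdn a1 b1 * d = d by rewrite muln_gcdl -ea -eb.
  rewrite /coprime => e; apply/eqP.
  by apply/eqP; rewrite -(eqn_pmul2r dpos) mul1n; apply/eqP.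
set L := a1 + b1.
have eL : (t1 + t2) %/ d = L by rewrite ea eb -mulnDl mulnK.
have eM : t1 + t2 = L * d by rewrite ea eb mulnDl.
have coL : coprime L a1 by rewrite coprime_sym /coprime gcdnDl.
have a1pos : 0 < a1 by move: h1; rewrite ea muln_gt0 => /andP[].
have ab : a1 < b1 by move: h12; rewrite ea eb ltn_mul2r => /andP[].
have L4 : 4 <= L.
  rewrite /L; case: (ltnP 3 (a1 + b1)) => // H.
  have a11 : a1 = 1 by lia.
  have b12 : b1 = 2 by lia.
  by move: h2; rewrite ea eb a11 b12 mul1n mulnC eqxx.
set f := fun k => ((k * a1 %% L) * d).+1.
exists (map f (iota 0 L)); split; last by rewrite size_map size_iota eL.
have fbound : forall k, (k * a1 %% L) * d < t1 + t2.
  by move=> k; rewrite eM ltn_mul2r dpos ltn_pmod //; lia.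
have nthf : forall p, p < L -> nth 0 (map f (iota 0 L)) p = f p.
  by move=> p hp; rewrite (nth_map 0) ?size_iota // nth_iota.
split.
- by rewrite size_map size_iota.
- rewrite map_inj_in_uniq ?iota_uniq // => i j; rewrite !mem_iota /= !add0n.
  move=> hi hj [] /eqP; rewrite eqn_pmul2r // -/(_ == _ %[mod L]) cancelC //.
  by rewrite !modn_small // => /eqP.
- apply/allP => v /mapP [k _ ->]; have := fbound k; rewrite /f; lia.
move=> p q /andP [hpq hq].
rewrite size_map size_iota in hq *.
have hp : p < L by apply: ltn_trans hpq hq.
rewrite !nthf //.
rewrite /toeplitz_adj /f.
have b1' := fbound p; have b2' := fbound q.
have -> : (1 <= (p * a1 %% L * d).+1 <= n) = true.
  by apply/andP; split => //; apply: leq_trans hn.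
have -> : (1 <= (q * a1 %% L * d).+1 <= n) = true.
  by apply/andP; split => //; apply: leq_trans hn.
rewrite /= adjA //.
have shift : forall k, (k * a1 %% L * d + t1) %% (t1 + t2) = (k.+1 * a1 %% L) * d.
  move=> k; rewrite eM {1}ea -mulnDl -muln_modl modnDml mulSn addnC //.
rewrite !shift !eqn_pmul2r //.
rewrite -/(_ == _ %[mod L]) -/(_ == _ %[mod L]) !cancelC //.
exact: finalL.
Qed.
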